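(* There is an absolute constant $c$ such that for every perfect square $n=\ell^2$, the tilted grid sequence $S\in[n]^n$ satisfies $\mathrm{OPT}(S)\le c\,n$.
   Context: Tilted grid sequence: let $\ell=\sqrt n$ and consider the $n$ points $\{(i\ell+(j-1),\ j\ell+i-1): i,j\in[\ell]\}$; no two share an $x$- or $y$-coordinate. $S$ is the permutation obtained by listing the points in increasing order of $y$-coordinate (time) and replacing each point's $x$-coordinate (key) by its rank among all $x$-coordinates. Dynamic BST model: an algorithm chooses an initial BST on $[n]$. To serve each access it touches a connected set of nodes containing the root and the accessed key, may rearrange them into any BST shape, and pays the number of touched nodes. $\mathrm{OPT}(S)$ is the minimum total cost over all offline algorithms. *)

(* Defs.v *)
From mathcomp Require Import all_boot.
Set Implicit Arguments. Unset Strict Implicit. Unset Printing Implicit Defensive.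

Inductive tree := Leaf | Node of tree & nat & tree.

Fixpoint inorder (t : tree) : seq nat :=
  if t is Node l k r then inorder l ++ k :: inorder r else [::].

Fixpoint nnodes (t : tree) : nat :=
  if t is Node l _ r then (nnodes l + nnodes r).+1 else 0.

(* A BST on the key set [n] = {1,...,n}: its in-order traversal is 1,2,...,n
   (this encodes both the key set and the search-tree property). *)
Definition bst_on (n : nat) (t : tree) : Prop := inorder t = iota 1 n.

(* [fill X fs]: plug the trees of [fs] (in left-to-right order) into the
   null-child positions of the "top part" X; returns the tree and the
   unused rest of [fs].  When size fs = (nnodes X).+1 every tree is used. *)
Fixpoint fill (X : tree) (fs : seq tree) : tree * seq tree :=
  match X with
  | Leaf => (head Leaf fs, behead fs)
  | Node l k r =>
      let p := fill l fs in
      let q := fill r p.2 in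
      (Node p.1 k q.1, q.2)
  end.

Definition fillT (X : tree) (fs : seq tree) : tree := (fill X fs).1.

(* Serving one access to key x in tree T, ending in tree T', at cost c:
   T decomposes as a top part X (a connected set of nodes containing the
   root) with the fringe subtrees F hanging below it; x is a node of X;
   X is rearranged into an arbitrary BST X' on the same keys, and the
   fringe subtrees are reattached in their (forced) positions. *)
Definition access_step (T : tree) (x : nat) (T' : tree) (c : nat) : Prop :=
  exists (X X' : tree) (F : seq tree),
    [/\ size F = (nnodes X).+1,
        T = fillT X F,
        x \in inorder X,
        inorder X' = inorder X &
        T' = fillT X' F] /\ c = nnodes X.

Inductive serves : tree -> seq nat -> nat -> Prop :=
  | serves_nil T : serves T [::] 0
  | serves_cons T x s T' c k :
      access_step T x T' c -> serves T' s k -> serves T (x :: s) (c + k).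

(* OPT(S) <= b  (for a sequence S over [n]): some offline algorithm, i.e. some
   initial BST on [n] together with a sequence of legal access steps, serves S
   with total cost at most b.  Since OPT(S) is the minimum of these costs,
   this is exactly "OPT(S) <= b". *)
Definition OPT_le (n : nat) (S : seq nat) (b : nat) : Prop :=
  exists (T0 : tree) (k : nat), [/\ bst_on n T0, serves T0 S k & k <= b].

Definition tilted_points (l : nat) : seq (nat * nat) :=
  [seq (i * l + (j - 1), j * l + i - 1) | i <- iota 1 l, j <- iota 1 l].

Definition xrank (l x : nat) : nat :=
  (count (fun p : nat * nat => p.1 < x) (tilted_points l)).+1.

Definition tilted_grid (l : nat) : seq nat :=
  [seq xrank l p.1 | p <- sort (fun p q : nat * nat => p.2 <= q.2) (tilted_points l)].

(* Main.v *)
Require Import Defs.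
From mathcomp Require Import all_boot zify.
Set Implicit Arguments. Unset Strict Implicit. Unset Printing Implicit Defensive.

Lemma fill_app X fs rest : size fs = (nnodes X).+1 ->
  fill X (fs ++ rest) = (fillT X fs, rest).
Proof.
elim: X fs rest => [|l IHl k r IHr] fs rest /=.
  by case: fs => [|f [|]] //= _.
move=> Hs.
have Hs1 : size (take (nnodes l).+1 fs) = (nnodes l).+1 by rewrite size_take Hs; case: ltngtP => //; lia.
have Hs2 : size (drop (nnodes l).+1 fs) = (nnodes r).+1 by rewrite size_drop Hs; lia.
have E := esym (cat_take_drop (nnodes l).+1 fs).
clear Hs; move: (take _ fs) (drop _ fs) E Hs1 Hs2 => fs1 fs2 -> Hs1 Hs2.
have E2 := IHr fs2 [::] Hs2; rewrite cats0 in E2.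
have E1 := IHl fs1 fs2 Hs1.
by rewrite /fillT /= -catA IHl //= IHr //= E1 /= E2.
Qed.

Lemma fillT_node l k r fs1 fs2 : size fs1 = (nnodes l).+1 ->
  fillT (Node l k r) (fs1 ++ fs2) = Node (fillT l fs1) k (fillT r fs2).
Proof. by move=> H; rewrite /fillT /= fill_app. Qed.

Lemma size_inorder t : size (inorder t) = nnodes t.
Proof. by elim: t => //= l IHl k r IHr; rewrite size_cat /= IHl IHr addnS. Qed.

Definition E := option (nat * tree).
Definition item := (E * nat * nat)%type.

Definition gapT (e : E) (t : tree) := if e is Some (d, R) then Node t d R else t.
Definition qtop (e : E) a := if e is Some (d, _) then Node (Node Leaf a Leaf) d Leaf
                              else Node Leaf a Leaf.
Definition optR (e : E) : seq tree := if e is Some (_, R) then [:: R] else [::].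
Definition optd (e : E) : seq nat := if e is Some (d, _) then [:: d] else [::].
Definition dW (e : E) r := if e is Some (d, _) then d else r.
Definition RW (e : E) r := if e is Some (_, R) then Node R r Leaf else Leaf.
Definition wX (e : E) r := if e is Some (d, _) then Node Leaf d (Node Leaf r Leaf)
                           else Node Leaf r Leaf.

Section Big.
Variable rp : nat -> tree.

Fixpoint preT P r a (its : seq item) : tree :=
  match its with
  | [::] => Node P r (Node Leaf a (rp a))
  | (e, r', a') :: its' => preT (Node P r (gapT e (Node Leaf a (rp a)))) r' a' its'
  end.
Fixpoint preX P r a (its : seq item) : tree :=
  match its with
  | [::] => Node P r (Node Leaf a Leaf)
  | (e, r', a') :: its' => preX (Node P r (qtop e a)) r' a' its'
  end.
Fixpoint fl a (its : seq item) : seq tree :=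
  match its with
  | [::] => [:: Leaf; rp a]
  | (e, r', a') :: its' => Leaf :: rp a :: optR e ++ fl a' its'
  end.
Fixpoint fl' a (its : seq item) : seq tree :=
  match its with
  | [::] => [:: rp a]
  | (e, r', a') :: its' => rp a :: optR e ++ Leaf :: fl' a' its'
  end.
Fixpoint postR a (its : seq item) : tree :=
  match its with
  | [::] => rp a
  | (e, r', a') :: its' => Node (Node (rp a) (dW e r') (RW e r')) a' (postR a' its')
  end.
Fixpoint postX (its : seq item) : tree :=
  match its with
  | [::] => Leaf
  | (e, r', a') :: its' => Node (wX e r') a' (postX its')
  end.
Fixpoint lastr r (its : seq item) : nat :=
  match its with
  | [::] => r
  | (_, r', _) :: its' => lastr r' its'
  end.
Fixpoint ino a (its : seq item) : seq nat :=
  match its with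
  | [::] => [:: a]
  | (e, r', a') :: its' => a :: optd e ++ r' :: ino a' its'
  end.
Fixpoint ino' (its : seq item) : seq nat :=
  match its with
  | [::] => [::]
  | (e, r', a') :: its' => optd e ++ r' :: a' :: ino' its'
  end.

Lemma fl_fl' a its : fl a its = Leaf :: fl' a its.
Proof. by elim: its a => [|[[e r'] a'] its IH] a //=; rewrite IH. Qed.

Lemma pre_fill its : forall Xp Fp P r a, size Fp = (nnodes Xp).+1 -> fillT Xp Fp = P ->
  fillT (preX Xp r a its) (Fp ++ fl a its) = preT P r a its.
Proof.
elim: its => [|[[e r'] a'] its IH] Xp Fp P r a Hs HP /=.
  by rewrite fillT_node // HP.
rewrite -[Leaf :: _]/([:: Leaf, rp a & optR e] ++ _) catA; apply: IH.
  by rewrite size_cat Hs; case: e => [[d R]|] /=; lia.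
rewrite fillT_node // HP; congr Node.
by case: e => [[d R]|].
Qed.

Lemma post_size its a : size (fl' a its) = (nnodes (postX its)).+1.
Proof.
elim: its a => [|[[e r'] a'] its IH] a //=.
by rewrite size_cat /= IH; case: e => [[d R]|] /=; lia.
Qed.

Lemma post_fill its a : fillT (postX its) (fl' a its) = postR a its.
Proof.
elim: its a => [|[[e r'] a'] its IH] a //=.
have -> : rp a :: optR e ++ Leaf :: fl' a' its = (rp a :: optR e ++ [:: Leaf]) ++ fl' a' its
  by rewrite /= -catA.
rewrite fillT_node; last by case: e => [[d R]|].
by rewrite IH; case: e => [[d R]|].
Qed.

Lemma pre_ino its : forall Xp r a, inorder (preX Xp r a its) = inorder Xp ++ r :: ino a its.
Proof.
elim: its => [|[[e r'] a'] its IH] Xp r a //=.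
rewrite IH /= -catA /=; congr (_ ++ _ :: _).
by case: e => [[d R]|].
Qed.

Lemma post_ino its : inorder (postX its) = ino' its.
Proof.
elim: its => [|[[e r'] a'] its IH] //=.
by rewrite IH; case: e => [[d R]|].
Qed.

Lemma ino_ino' a its : ino a its = a :: ino' its.
Proof. by elim: its a => [|[[e r'] a'] its IH] a //=; rewrite IH. Qed.

Lemma lastr_in r a its : lastr r its \in r :: ino a its.
Proof.
elim: its r a => [|[[e r'] a'] its IH] r a /=; first by rewrite inE eqxx.
rewrite !inE mem_cat; apply/orP; right; apply/orP; right; apply/orP; right.
by have := IH r' a'; rewrite inE.
Qed.

Lemma postX_size its : nnodes (postX its) <= 3 * size its.
Proof.
elim: its => [|[[e r'] a'] its IH] //=.
by case: e => [[d R]|] /=; lia.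
Qed.

Lemma big_step D r0 a0 its :
  exists c, access_step (preT D r0 a0 its) (lastr r0 its)
     (Node (Node D r0 Leaf) a0 (postR a0 its)) c /\ c <= 2 + 3 * size its.
Proof.
set X := preX Leaf r0 a0 its.
set X' := Node (Node Leaf r0 Leaf) a0 (postX its).
have HI : inorder X' = inorder X by rewrite /X /X' pre_ino /= post_ino ino_ino'.
have Hn : nnodes X = nnodes X' by rewrite -!size_inorder HI.
exists (nnodes X); split; last first.
  by rewrite Hn /X' /=; have := postX_size its; lia.
exists X, X', (D :: fl a0 its); split => //; split.
- by rewrite fl_fl' /= post_size Hn.
- by rewrite (pre_fill its (Xp := Leaf) (Fp := [:: D]) (P := D)) .
- by rewrite /X pre_ino /= lastr_in.
- by [].
- rewrite fl_fl' -[D :: Leaf :: _]/([:: D; Leaf] ++ _) fillT_node //.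
  by rewrite post_fill.
Qed.
End Big.

Definition serves_to T s T' k := forall s2 k2, serves T' s2 k2 -> serves T (s ++ s2) (k + k2).

Lemma st_nil T : serves_to T [::] T 0.
Proof. by move=> s2 k2. Qed.

Lemma st_step T x T' c : access_step T x T' c -> serves_to T [:: x] T' c.
Proof. by move=> H s2 k2 H2; apply: serves_cons H H2. Qed.

Lemma st_cat T s1 T1 k1 s2 T2 k2 : serves_to T s1 T1 k1 -> serves_to T1 s2 T2 k2 ->
  serves_to T (s1 ++ s2) T2 (k1 + k2).
Proof. by move=> H1 H2 s3 k3 H3; rewrite -catA -addnA; apply/H1/H2. Qed.

Lemma st_serves T s T' k : serves_to T s T' k -> serves T s k.
Proof. by move=> H; have := H [::] 0 (serves_nil _); rewrite cats0 addn0. Qed.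

Fixpoint spR (ps : seq (tree * nat)) G :=
  match ps with [::] => G | (g, r') :: ps' => Node g r' (spR ps' G) end.
Fixpoint lc P r (ps : seq (tree * nat)) G :=
  match ps with [::] => Node P r G | (g, r') :: ps' => lc (Node P r g) r' ps' G end.

Lemma small_steps ps : forall P r G,
  serves_to (Node P r (spR ps G)) (belast r (map snd ps)) (lc P r ps G) (2 * size ps).
Proof.
elim: ps => [|[g r'] ps IH] P r G /=; first exact: st_nil.
rewrite -[r :: _]/([:: r] ++ _) mulnS -[2 + _]/(2 + _).
apply: st_cat (IH _ _ _); apply: st_step.
exists (Node Leaf r (Node Leaf r' Leaf)), (Node (Node Leaf r Leaf) r' Leaf), [:: P; g; spR ps G].
by split => //; split => //; rewrite !inE eqxx.
Qed.

Lemma lc_last ps : forall P r G, exists P', lc P r ps G = Node P' (last r (map snd ps)) G.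
Proof.
elim: ps => [|[g r'] ps IH] P r G /=; first by exists P.
exact: IH.
Qed.

Section Pairs.
Variable rp : nat -> tree.
Fixpoint pairs a (its : seq item) : seq (tree * nat) :=
  match its with
  | [::] => [::]
  | (e, r', a') :: its' => (gapT e (Node Leaf a (rp a)), r') :: pairs a' its'
  end.
Fixpoint lasta a (its : seq item) : nat :=
  match its with [::] => a | (_, _, a') :: its' => lasta a' its' end.
Fixpoint postpairs a (its : seq item) : seq (tree * nat) :=
  match its with
  | [::] => [::]
  | (e, r', a') :: its' => (Node (rp a) (dW e r') (RW e r'), a') :: postpairs a' its'
  end.

Lemma pre_lc its : forall P r a,
  preT rp P r a its = lc P r (pairs a its) (Node Leaf (lasta a its) (rp (lasta a its))).
Proof. by elim: its => [|[[e r'] a'] its IH] P r a //=. Qed.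

Lemma pairs_snd its : forall a, map snd (pairs a its) = map (fun x : item => x.1.2) its.
Proof. by elim: its => [|[[e r'] a'] its IH] a //=; rewrite IH. Qed.

Lemma size_pairs its : forall a, size (pairs a its) = size its.
Proof. by elim: its => [|[[e r'] a'] its IH] a //=; rewrite IH. Qed.

Lemma lastr_last its : forall r, lastr r its = last r (map (fun x : item => x.1.2) its).
Proof. by elim: its => [|[[e r'] a'] its IH] r //=. Qed.

Lemma postR_sp its : forall a, postR rp a its = spR (postpairs a its) (rp (lasta a its)).
Proof. by elim: its => [|[[e r'] a'] its IH] a //=; rewrite IH. Qed.

Lemma postpairs_snd its : forall a, map snd (postpairs a its) = map (fun x : item => x.2) its.
Proof. by elim: its => [|[[e r'] a'] its IH] a //=; rewrite IH. Qed.
End Pairs.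

Fixpoint rpath (s : seq nat) : tree :=
  if s is x :: s' then Node Leaf x (rpath s') else Leaf.
Definition rpm m a := rpath (iota a.+1 m).

Definition shift_item (x : item) : item :=
  let: (e, r', a') := x in (Some (dW e r', RW e r'), a', a'.+1).

Lemma post_shift m its : forall a, postR (rpm m.+1) a its =
  spR (pairs (rpm m) a.+1 (map shift_item its))
      (Node Leaf (lasta a.+1 (map shift_item its)) (rpm m (lasta a.+1 (map shift_item its)))).
Proof. by elim: its => [|[[e r'] a'] its IH] a //=; rewrite IH. Qed.

Definition kf (x : item) : nat * nat := (x.1.2, x.2).
Definition keysS l j := [seq (k * l + j, (k * l + j).+1) | k <- iota 1 l.-1].
Definition InvS l j T := exists D (its : seq item), map kf its = keysS l j /\
  T = Node D j (spR (pairs (rpm (l - j.+1)) j.+1 its)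
        (Node Leaf (lasta j.+1 its) (rpm (l - j.+1) (lasta j.+1 its)))).
Definition InvA l j T := exists D ps G, map snd ps = [seq k * l + j | k <- iota 1 l.-1] /\
  T = Node D j (spR ps G).
Definition round l j := j :: [seq k * l + j | k <- iota 1 l.-1].

Lemma its_r l j (its : seq item) : map kf its = keysS l j ->
  map (fun x : item => x.1.2) its = [seq k * l + j | k <- iota 1 l.-1].
Proof.
move=> H; have := congr1 (map fst) H; rewrite -!map_comp /= => <-.
by apply: eq_map => -[[e r'] a'].
Qed.

Lemma its_a l j (its : seq item) : map kf its = keysS l j ->
  map (fun x : item => x.2) its = [seq k * l + j.+1 | k <- iota 1 l.-1].
Proof.
move=> H; have := congr1 (map snd) H; rewrite -!map_comp /=.
have -> : [seq k * l + j.+1 | k <- iota 1 l.-1] = [seq (k * l + j).+1 | k <- iota 1 l.-1].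
  by apply: eq_map => k; rewrite addnS.
by move=> <-; apply: eq_map => -[[e r'] a'].
Qed.

Lemma mid_round l j T : j < l -> InvS l j T -> exists T' k, [/\ k <= 5 * l,
  serves_to T (round l j) T' k, InvA l j.+1 T' & (j.+1 < l -> InvS l j.+1 T')].
Proof.
move=> jl [D [its [Hk ->]]].
set rp := rpm (l - j.+1).
have Hr := its_r Hk; have Ha := its_a Hk.
have Hsz : size its = l.-1 by rewrite -(size_map kf) Hk size_map size_iota.
have [c [Hc Hcb]] := big_step rp D j j.+1 its.
exists (Node (Node D j Leaf) j.+1 (postR rp j.+1 its)), (2 * size its + c).
split.
- by rewrite Hsz; lia.
- have -> : round l j = belast j (map snd (pairs rp j.+1 its)) ++ [:: lastr j its].
    by rewrite lastr_last cats1 -(pairs_snd rp its j.+1) -lastI pairs_snd Hr.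
  rewrite -(size_pairs rp its j.+1).
  apply: st_cat; first exact: small_steps.
  by apply: st_step; rewrite -pre_lc.
- exists (Node D j Leaf), (postpairs rp j.+1 its), (rp (lasta j.+1 its)); split.
    by rewrite postpairs_snd Ha.
  by rewrite postR_sp.
- move=> jl2; exists (Node D j Leaf), (map shift_item its); split.
    have -> : map kf (map shift_item its) = map (fun p => (p.2, p.2.+1)) (map kf its).
      by rewrite -!map_comp; apply: eq_map => -[[e r'] a'].
    by rewrite Hk /keysS -map_comp; apply: eq_map => k /=; rewrite addnS.
  have E : l - j.+1 = (l - j.+2).+1 by lia.
  by rewrite /rp E post_shift.
Qed.

Lemma last_round l j T : InvA l j T -> exists k, k <= 2 * l.-1 + 1 /\ serves T (round l j) k.
Proof.
move=> [D [ps [G [Hk ->]]]].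
have [P' HP] := lc_last ps D j G.
exists (2 * size ps + 1); split.
  by rewrite -(size_map snd) Hk size_map size_iota.
apply: st_serves.
have -> : round l j = belast j (map snd ps) ++ [:: last j (map snd ps)].
  by rewrite cats1 -lastI Hk.
apply: st_cat; first exact: small_steps.
rewrite HP; apply: st_step.
exists (Node Leaf (last j (map snd ps)) Leaf), (Node Leaf (last j (map snd ps)) Leaf), [:: P'; G].
by split => //; split => //; rewrite inE eqxx.
Qed.

Lemma InvS_A l j T : InvS l j T -> InvA l j T.
Proof.
move=> [D [its [Hk ->]]].
exists D, (pairs (rpm (l - j.+1)) j.+1 its), (Node Leaf (lasta j.+1 its) (rpm (l - j.+1) (lasta j.+1 its))).
by rewrite pairs_snd (its_r Hk).
Qed.

Lemma rounds l d : forall j T, 0 < j -> j + d = l -> InvA l j T -> (j < l -> InvS l j T) ->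
  exists k, k <= 5 * l * d.+1 /\ serves T (flatten [seq round l j' | j' <- iota j d.+1]) k.
Proof.
elim: d => [|d IH] j T j0 Hjd HA HS.
  have [k [Hk Hs]] := last_round HA.
  by exists k; split; [lia | rewrite /= cats0].
have jl : j < l by lia.
have [T' [k [Hk Hs HA' HS']]] := mid_round jl (HS jl).
have [k' [Hk' Hs']] := IH j.+1 T' ltac:(lia) ltac:(lia) HA' HS'.
exists (k + k'); split; first by rewrite mulnS; lia.
by rewrite [iota _ _]/= [map _ _]/= [flatten _]/=; apply: Hs.
Qed.

Lemma inorder_rpath s : inorder (rpath s) = s.
Proof. by elim: s => //= x s ->. Qed.

Definition its0 l : seq item := [seq ((None : E), x * l + 1, (x * l + 1).+1) | x <- iota 1 l.-1].

Lemma ino_gen l n : 1 < l -> forall k a, a = k * l + 2 ->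
  let its := [seq ((None : E), x * l + 1, (x * l + 1).+1) | x <- iota k.+1 n] in
  inorder (spR (pairs (rpm (l - 2)) a its)
     (Node Leaf (lasta a its) (rpm (l - 2) (lasta a its)))) = iota a (l.-1 + n * l).
Proof.
move=> l1; elim: n => [|n IH] k a Ha /=.
  rewrite /rpm inorder_rpath; have -> : l.-1 + 0 = (l - 2).+1 by lia.
  by [].
rewrite /rpm inorder_rpath.
rewrite -/(rpm (l - 2)) (IH k.+1 (k.+1 * l + 1).+1); last by lia.
have E : l.-1 + n.+1 * l = (l - 2).+1 + (1 + (l.-1 + n * l)) by rewrite mulSn; lia.
rewrite E iotaD iotaD /= -cat_cons; congr (_ ++ _ :: _).
- rewrite mulSn; lia.
- rewrite -iotaD add0n; have -> : (k.+1 * l + 1).+1 = (a + (l - 2).+1).+1 by rewrite mulSn; lia.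
  by [].
Qed.

Lemma init_tree l : 1 < l -> exists T0, bst_on (l * l) T0 /\ InvS l 1 T0.
Proof.
move=> l1.
set its := its0 l.
exists (Node Leaf 1 (spR (pairs (rpm (l - 2)) 2 its)
        (Node Leaf (lasta 2 its) (rpm (l - 2) (lasta 2 its))))); split.
  rewrite /bst_on /= (@ino_gen l l.-1 l1 0 2 erefl).
  have -> : l * l = 1 + (l.-1 + l.-1 * l) by move: l1; clear; case: l => // n _; rewrite mulSn /=; lia.
  rewrite add1n /=; congr (_ :: _); by rewrite (iotaD 2).
exists Leaf, its; split => //.
by rewrite /its /its0 /keysS -map_comp.
Qed.

Lemma inner_iota c n : [seq c + (b - 1) | b <- iota 1 n] = iota c n.
Proof.
rewrite -[1]/(1 + 0) iotaDl -map_comp -[c]addn0 iotaDl; apply: eq_map => b /=.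
by rewrite addn0 add1n subSS subn0.
Qed.

Lemma flat_iota l k m :
  flatten [seq [seq a * l + (b - 1) | b <- iota 1 l] | a <- iota k m] = iota (k * l) (m * l).
Proof.
elim: m k => [|m IH] k //=.
by rewrite inner_iota IH [m.+1 * l]mulSn iotaD mulSn addnC.
Qed.

Section Grid.
Variable l : nat.
Let pts := tilted_points l.
Let tp := flatten [seq [seq (i * l + (j - 1), j * l + i - 1) | i <- iota 1 l] | j <- iota 1 l].

Lemma snd_tp : map snd tp = iota l (l * l).
Proof.
have := flat_iota l 1 l; rewrite mul1n => <-.
rewrite /tp map_flatten -map_comp.
congr flatten; apply: eq_map => j /=; rewrite -map_comp.
apply/eq_in_map => i; rewrite mem_iota /= => /andP[i1 _].
by rewrite addnBA.
Qed.

Lemma fst_pts : map fst pts = iota l (l * l).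
Proof.
have := flat_iota l 1 l; rewrite mul1n => <-.
rewrite /pts /tilted_points map_flatten -map_comp.
by congr flatten; apply: eq_map => i /=; rewrite -map_comp.
Qed.

Lemma mem_pts_tp : pts =i tp.
Proof.
move=> z; apply/allpairsP/allpairsP => -[[i j] /= [Hi Hj ->]].
  by exists (j, i).
by exists (j, i).
Qed.

Lemma sort_pts : sort (fun p q : nat * nat => p.2 <= q.2) pts = tp.
Proof.
have Utp : uniq tp by apply: (@map_uniq _ _ snd); rewrite snd_tp iota_uniq.
have Sz : size pts = size tp.
  by rewrite -(size_map fst) fst_pts -(size_map snd) snd_tp.
have Upts : uniq pts by rewrite (uniq_size_uniq Utp) ?Sz // => z; rewrite mem_pts_tp.
have P : perm_eq pts tp by apply: uniq_perm => //; exact: mem_pts_tp.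
set S := sort _ pts.
have PS : perm_eq S tp by rewrite /S perm_sort.
have sS : sorted (fun p q : nat * nat => p.2 <= q.2) S.
  by apply: sort_sorted => p q; exact: leq_total.
have uS : uniq (map snd S) by rewrite (perm_uniq (perm_map snd PS)) snd_tp iota_uniq.
have sS' : sorted (fun p q : nat * nat => p.2 < q.2) S.
  rewrite -(@sorted_map _ _ snd ltn) ltn_sorted_uniq_leq uS /=.
  by rewrite sorted_map.
apply: (irr_sorted_eq (leT := fun p q : nat * nat => p.2 < q.2)).
- by move=> y x z; exact: ltn_trans.
- by move=> x; rewrite ltnn.
- exact: sS'.
- by rewrite -(@sorted_map _ _ snd ltn) snd_tp iota_ltn_sorted.
- exact: perm_mem.
Qed.
End Grid.

Lemma count_iota x a n : count (fun y => y < x) (iota a n) = minn n (x - a).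
Proof.
elim: n a => [|n IH] a /=; first by rewrite min0n.
rewrite IH; case: ltnP => H /=; lia.
Qed.

Lemma xrank_val l i j : i < l -> 0 < j <= l -> xrank l (i.+1 * l + (j - 1)) = i * l + j.
Proof.
move=> il /andP[j0 jl].
rewrite /xrank -(count_map fst (fun y => y < _)) fst_pts count_iota.
have H1 : i.+1 * l + (j - 1) - l = i * l + (j - 1) by rewrite mulSn; lia.
rewrite H1.
have H2 : i * l + (j - 1) <= l * l.
  have : i * l <= l.-1 * l by rewrite leq_mul2r; lia.
  case: l il jl {H1} => // l' _ jl'; rewrite mulSn /=; lia.
have -> : minn (l * l) (i * l + (j - 1)) = i * l + (j - 1) by lia.
lia.
Qed.

Lemma round_alt l j : 0 < l -> [seq (i - 1) * l + j | i <- iota 1 l] = round l j.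
Proof.
case: l => // l _.
rewrite -[1]/(1 + 0) iotaDl -map_comp /round /=.
congr (_ :: _).
by apply: eq_map => k /=; rewrite addn0 addKn.
Qed.

Lemma grid_eq l : 0 < l -> tilted_grid l = flatten [seq round l j | j <- iota 1 l].
Proof.
move=> l0.
rewrite /tilted_grid sort_pts map_flatten -map_comp; congr flatten.
apply/eq_in_map => j; rewrite mem_iota => /andP[j1 jl] /=.
rewrite -round_alt // -map_comp; apply/eq_in_map => i; rewrite mem_iota => /andP[i1 il] /=.
case: i i1 il => // i _ il.
rewrite xrank_val //; last by apply/andP; split; lia.
by rewrite subSS subn0.
Qed.

Theorem mainTheorem11 :
  exists c : nat, forall l : nat,
    OPT_le (l * l) (tilted_grid l) (c * (l * l)).
Proof.
exists 5 => l.
case: l => [|l].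
  by exists Leaf, 0; split => //; rewrite /tilted_grid /tilted_points /=; exact: serves_nil.
have [T0 [HB HA HS]] : exists T0, [/\ bst_on (l.+1 * l.+1) T0, InvA l.+1 1 T0 &
                                    (1 < l.+1 -> InvS l.+1 1 T0)].
  case: l => [|l].
    exists (Node Leaf 1 Leaf); split => //.
    by exists Leaf, [::], Leaf.
  have [T0 [HB HS]] := @init_tree l.+2 erefl.
  by exists T0; split => //; apply: InvS_A.
have [k [Hk Hs]] := @rounds l.+1 l 1 T0 erefl ltac:(lia) HA HS.
exists T0, k; split => //.
  by rewrite grid_eq.
by rewrite mulnA.
Qed.
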